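(* In the online tolling setting described in the context, let $\bm{\pi}$ be any tolling policy producing nonnegative tolls $\boldsymbol{\tau}^{(t)}$, $t\in[T]$, and let $\bm{x}^t$ be the edge flows of the resulting equilibria. Then $$R_T(\bm{\pi})\le\mathbb{E}\Big[\sum_{t=1}^T\boldsymbol{\tau}^{(t)}\cdot(\bm{c}-\bm{x}^t)\Big].$$
   Context: Network: directed graph $G=(V,E)$, edge capacities $\bm{c}=\{c_e\}$, fixed edge travel times $l_e$, $l_P=\sum_{e\in P}l_e$. Finite user set $\mathcal{U}$; user $u$ has fixed outside-option cost $\lambda_u$. In each period $t=1,\dots,T$, O-D pairs $w^t_u$ and values of time $v^t_u\ge0$ are drawn i.i.d. across periods from a distribution $\mathcal{D}$; $\mathcal{P}^t_u$ is the finite set of paths for $w^t_u$. Given tolls $\boldsymbol{\tau}^{(t)}$, the period-$t$ equilibrium assigns each user to a path $P\in\mathcal{P}^t_u$ or the outside option so as to minimize cost ($v^t_ul_P+\sum_{e\in P}\tau^{(t)}_e$ for a path, $\lambda_u$ for the outside option; capacities need not be respected), encoded by binary $f^t_{P,u},f^t_{o,u}$, with edge flows $x^t_e=\sum_u\sum_{P\in\mathcal{P}^t_u:e\in P}f^t_{P,u}$. A tolling policy chooses $\boldsymbol{\tau}^{(t)}$ as a function of $\bm{x}^1,\dots,\bm{x}^{t-1}$. Let $U_t=\sum_u(v^t_u\sum_Pl_Pf^t_{P,u}+\lambda_uf^t_{o,u})$ and $U^*_t$ be the minimum of this objective over binary assignments (each user exactly one path or the outside option) satisfying $\sum_u\sum_{P\ni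 e}f_{P,u}\le c_e$ for all $e$. Regret: $R_T(\bm{\pi})=\mathbb{E}[\sum_{t=1}^T(U_t-U^*_t)]$, expectation over $\mathcal{D}$. *)

(* Defs.v *)
From HB Require Import structures.
From mathcomp Require Import all_boot all_order all_algebra.
From mathcomp Require Import all_classical all_reals all_analysis.
Set Implicit Arguments. Unset Strict Implicit. Unset Printing Implicit Defensive.
Import Order.TTheory GRing.Theory Num.Theory.
Local Open Scope classical_set_scope.
Local Open Scope ring_scope.

Section Network.
Variables (V E : finType) (src tgt : E -> V).

Fixpoint is_walk (o d : V) (s : seq E) : bool :=
  match s with
  | [::] => o == d
  | e :: s' => (src e == o) && is_walk (tgt e) d s'
  end.

Definition is_path (o d : V) (s : seq E) : bool :=
  is_walk o d s && uniq (o :: map tgt s).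

(* an option of a user with O-D pair w: [Some P] = path P in P_w,
   [None] = outside option *)
Definition option_valid (w : V * V) (o : option (seq E)) : bool :=
  if o is Some P then is_path w.1 w.2 P else true.
End Network.

Section Tolling.
Variable R : realType.
Variables (V E U : finType) (src tgt : E -> V).
Variables (l : E -> R)
          (lam : U -> R).
(* Per-period type profiles: an abstract measurable space Theta; a profile
   th gives each user an O-D pair [od th u] and a value of time [vot th u]. *)
Variables (d : measure_display) (Theta : measurableType d)
          (od : Theta -> U -> V * V) (vot : Theta -> U -> R).

Definition assignment := U -> option (seq E).

Definition valid_assignment (th : Theta) (f : assignment) : Prop :=
  forall u, option_valid src tgt (od th u) (f u).

Definition path_len (P : seq E) : R := \sum_(e <- P) l e.

Definition user_cost (th : Theta) (tau : E -> R) (u : U) (o : option (seq E)) : R :=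
  match o with
  | None => lam u
  | Some P => vot th u * path_len P + \sum_(e <- P) tau e
  end.

Definition is_equilibrium (th : Theta) (tau : E -> R) (f : assignment) : Prop :=
  valid_assignment th f /\
  forall u o, option_valid src tgt (od th u) o ->
    user_cost th tau u (f u) <= user_cost th tau u o.

Definition edge_flow (f : assignment) (e : E) : R :=
  \sum_(u : U) (if f u is Some P then (e \in P)%:R else 0).

Definition social_cost (th : Theta) (f : assignment) : R :=
  \sum_(u : U) (if f u is Some P then vot th u * path_len P else lam u).

Definition Ustar (c : E -> R) (th : Theta) : \bar R :=
  ereal_inf [set (social_cost th f)%:E | f in
    [set f | valid_assignment th f /\ forall e, edge_flow f e <= c e]].

(* Online process. Periods t = 0,...,T-1 (paper's t = 1,...,T).        *)
(* pol t h : tolls of period t as a function of the list h of past     *)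
(*           edge-flow vectors [x^1; ...; x^{t-1}];                    *)
(* sel t th tau : the equilibrium reached in period t (selection).     *)
Variables (dO : measure_display) (Omega : measurableType dO).
Variables (pol : nat -> seq (E -> R) -> (E -> R))
          (sel : nat -> Theta -> (E -> R) -> assignment)
          (theta : nat -> Omega -> Theta).

Fixpoint flow_hist (om : Omega) (n : nat) : seq (E -> R) :=
  if n is n'.+1 then
    let h := flow_hist om n' in
    rcons h (edge_flow (sel n' (theta n' om) (pol n' h)))
  else [::].

Definition tolls (t : nat) (om : Omega) : E -> R := pol t (flow_hist om t).
Definition assign (t : nat) (om : Omega) : assignment :=
  sel t (theta t om) (tolls t om).
Definition flows (t : nat) (om : Omega) : E -> R := edge_flow (assign t om).

Definition iid (P : probability Omega R) : Prop :=
  (forall t, measurable_fun setT (theta t)) /\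
  (forall t (A : set Theta), measurable A ->
     P (theta t @^-1` A) = P (theta 0 @^-1` A)) /\
  (forall (I : seq nat) (A : nat -> set Theta), uniq I ->
     (forall i, measurable (A i)) ->
     P (\bigcap_(i in [set` I]) (theta i @^-1` A i)) =
       (\prod_(i <- I) P (theta i @^-1` A i))%E).

Definition regret (P : probability Omega R) (c : E -> R) (T : nat) : \bar R :=
  (\int[P]_om (\sum_(t < T)
      ((social_cost (theta t om) (assign t om))%:E - Ustar c (theta t om))))%E.

Definition toll_slack (P : probability Omega R) (c : E -> R) (T : nat) : \bar R :=
  (\int[P]_om (\sum_(t < T) \sum_(e : E) tolls t om e * (c e - flows t om e))%:E)%E.

End Tolling.

(* Main.v *)
Require Import Defs.
From HB Require Import structures.
From mathcomp Require Import all_boot all_order all_algebra.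
From mathcomp Require Import all_classical all_reals all_analysis.
From mathcomp Require Import lra.
Import Order.TTheory GRing.Theory Num.Theory.
Local Open Scope ring_scope.

Section Core.
Variables (R : realType) (V E U : finType) (src tgt : E -> V) (l : E -> R) (lam : U -> R)
  (d : measure_display) (Theta : measurableType d)
  (od : Theta -> U -> V * V) (vot : Theta -> U -> R).

Definition tollsum (tau : E -> R) (o : option (seq E)) : R :=
  if o is Some P then \sum_(e <- P) tau e else 0.

Lemma user_cost_split th tau u o :
  user_cost l lam vot th tau u o =
  (if o is Some P then vot th u * path_len l P else lam u) + tollsum tau o.
Proof. by case: o => [P|] /=; rewrite ?addr0. Qed.

Lemma toll_flow th tau (f : assignment E U) :
  valid_assignment src tgt od th f ->
  \sum_u tollsum tau (f u) = \sum_e tau e * edge_flow R f e.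
Proof.
move=> vf.
under eq_bigr => u _.
  have -> : tollsum tau (f u) =
     \sum_e tau e * (if f u is Some P then (e \in P)%:R else 0).
    have := vf u; case: (f u) => [P|] /=; last by rewrite big1 // => e _; rewrite mulr0.
    rewrite /is_path => /andP[_ /= /andP[_ /map_uniq uP]].
    rewrite big_uniq //= [RHS](bigID (fun e => e \in P)) /= [X in _ + X]big1 ?addr0;
      last by move=> e /negbTE ->; rewrite mulr0.
    by apply: eq_bigr => e ->; rewrite mulr1.
  over.
rewrite exchange_big /=; apply: eq_bigr => e _.
by rewrite /edge_flow mulr_sumr.
Qed.

Lemma core th (tau : E -> R) (f g : assignment E U) (c : E -> R) :
  (forall e, 0 <= tau e) ->
  is_equilibrium src tgt l lam od vot th tau f ->
  valid_assignment src tgt od th g ->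
  (forall e, edge_flow R g e <= c e) ->
  social_cost l lam vot th f - social_cost l lam vot th g <=
  \sum_e tau e * (c e - edge_flow R f e).
Proof.
move=> tau0 [vf eqf] vg gc.
have H : \sum_u user_cost l lam vot th tau u (f u) <=
         \sum_u user_cost l lam vot th tau u (g u).
  by apply: ler_sum => u _; apply: eqf; exact: vg.
move: H; rewrite !(eq_bigr _ (fun u _ => user_cost_split th tau u _)) !big_split /=.
rewrite (@toll_flow th tau f vf) (@toll_flow th tau g vg) -/(social_cost l lam vot th f) -/(social_cost l lam vot th g).
have : \sum_e tau e * edge_flow R g e <= \sum_e tau e * c e.
  by apply: ler_sum => e _; apply: ler_wpM2l.
have -> : \sum_e tau e * (c e - edge_flow R f e) =
   \sum_e tau e * c e - \sum_e tau e * edge_flow R f e.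
  by rewrite -sumrB; apply: eq_bigr => e _; rewrite mulrBr.
lra.
Qed.
End Core.

Lemma int_mono (d : measure_display) (T : measurableType d) (R : realType)
  (mu : set T -> \bar R) (f g : T -> \bar R) :
  (forall x, (f x <= g x)%E) ->
  (integral mu setT f <= integral mu setT g)%E.
Proof.
move=> fg; rewrite /integral !patch_setT.
have fg' : {in (setT : set T), forall x, (f x <= g x)%E} by move=> x _; exact: fg.
apply: leeB; apply: ereal_sup_le => _ [h /= hf <-]; exists h => //= x.
- by apply: le_trans (hf x) _; apply: (funepos_le fg'); exact: in_setT.
- by apply: le_trans (hf x) _; apply: (funeneg_le fg'); exact: in_setT.
Qed.

Theorem lemma1 (R : realType) (V E U : finType) (src tgt : E -> V)
  (c : E -> R) (l : E -> R) (lam : U -> R)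
  (d : measure_display) (Theta : measurableType d)
  (od : Theta -> U -> V * V) (vot : Theta -> U -> R)
  (dO : measure_display) (Omega : measurableType dO) (P : probability Omega R)
  (theta : nat -> Omega -> Theta)
  (pol : nat -> seq (E -> R) -> (E -> R))
  (sel : nat -> Theta -> (E -> R) -> assignment E U)
  (T : nat) :
  (forall th u, 0 <= vot th u) ->
  iid theta P ->
  (forall t h e, 0 <= pol t h e) ->
  (forall t th tau, is_equilibrium src tgt l lam od vot th tau (sel t th tau)) ->
  (regret src tgt l lam od vot pol sel theta P c T
     <= toll_slack pol sel theta P c T)%E.
Proof.
move=> _ _ pol0 heq; rewrite /regret /toll_slack; apply: int_mono => om.
rewrite -sumEFin; apply: lee_sum => t _.
set a := social_cost l lam vot _ _.
set b := \sum_e _.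
have key : ((a - b)%:E <= Ustar src tgt l lam od vot c (theta t om))%E.
  apply/ereal_infP => _ [g [vg gc] <-]; rewrite lee_fin.
  have := @core R V E U src tgt l lam d Theta od vot (theta t om) (tolls pol sel theta t om)
     (assign pol sel theta t om) g c (fun e => pol0 _ _ e) (heq _ _ _) vg gc.
  rewrite /a /b /flows; lra.
move: key; case: (Ustar _ _ _ _ _ _ _ _) => [r||] //=.
- by rewrite !lee_fin; lra.
- by move=> _; rewrite leNye.
Qed.
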